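(* Fix real numbers $\alpha>0$ and $c>-1$ such that $\frac{\alpha}{1+c}\le\frac12$. If $v_1,\ldots,v_n$ are positive integers satisfying $\frac{v_i}{v_{i-1}}\ge i+c-1$ for all $2\le i\le n$, then $\mathrm{ML}(v_1,\ldots,v_n)\ge\frac{\alpha}{n+c}$.
   Context: For a real number $x$, $\Vert x\Vert$ denotes the distance from $x$ to the nearest integer. For positive integers $v_1,\ldots,v_n$, the maximum loneliness is $\mathrm{ML}(v_1,\ldots,v_n)=\max_{t\in\mathbb{R}}\min_{1\le i\le n}\Vert t v_i\Vert$. *)

(* Defs.v *)
From HB Require Import structures.
From mathcomp Require Import all_boot all_order all_algebra.
From mathcomp Require Import all_classical all_reals.
Set Implicit Arguments. Unset Strict Implicit. Unset Printing Implicit Defensive.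
Import Order.TTheory GRing.Theory Num.Theory.
Local Open Scope ring_scope.
Local Open Scope classical_set_scope.

Definition dist_int (R : realType) (x : R) : R :=
  Num.min (x - (Num.floor x)%:~R) ((Num.floor x)%:~R + 1 - x).

(* min_{1 <= i <= n} ||t v_i||  (for n >= 1; the neutral 1 is never reached
   in a meaningful way since ||.|| <= 1/2) *)
Definition loneliness (R : realType) (n : nat) (v : nat -> nat) (t : R) : R :=
  \big[Num.min/1]_(1 <= i < n.+1) dist_int (t * (v i)%:R).

(* ML(v_1,...,v_n) = max_t min_i ||t v_i||, written as the supremum over t
   (the maximum is attained, so this is the same value) *)
Definition ML (R : realType) (n : nat) (v : nat -> nat) : R :=
  sup (range (loneliness n v)).

(* Main.v *)
Require Import Defs.
From HB Require Import structures.
From mathcomp Require Import all_boot all_order all_algebra.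
From mathcomp Require Import all_classical all_reals.
From mathcomp Require Import ring lra zify.
Import Order.TTheory GRing.Theory Num.Theory.

Lemma sum_period (f : nat -> nat) w P :
  \sum_(0 <= k < w * P) f (k %% P) = w * \sum_(0 <= r < P) f r.
Proof.
elim: w => [|w IH]; first by rewrite !mul0n big_geq.
rewrite mulSn addnC (big_cat_nat _ (n := w * P)) //= ?leq_addr // IH.
have := @big_addn _ 0 addn 0 (w * P + P) (w * P) xpredT (fun k => f (k %% P)).
rewrite add0n => ->.
rewrite addKn [X in _ + X](eq_big_nat _ _ (F2 := fun r => f r)); last first.
  by move=> i /andP[_ hi]; rewrite addnC modnMDl modn_small.
by rewrite mulSn addnC.
Qed.

Lemma sum_lt (m P : nat) : m <= P -> \sum_(0 <= r < P) (r < m) = m.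
Proof.
move=> hm; rewrite (big_cat_nat _ (n := m)) //=.
rewrite (eq_big_nat _ _ (F2 := fun _ => 1)); last by move=> i /andP[_ ->].
rewrite [X in _ + X](eq_big_nat _ _ (F2 := fun _ => 0)); last first.
  by move=> i /andP[hi _]; rewrite ltnNge hi.
by rewrite !sum_nat_const_nat; lia.
Qed.

Lemma sum_gt (m P : nat) : 0 < m -> m <= P -> \sum_(0 <= r < P) (P - m < r) = m - 1.
Proof.
move=> m0 hm; rewrite (big_cat_nat _ (n := P - m + 1)) //=; last by lia.
rewrite (eq_big_nat _ _ (F2 := fun _ => 0)); last first.
  move=> i /andP[_ hi]; have -> : (P - m < i) = false by apply/negbTE; rewrite -leqNgt; lia.
  by [].
rewrite [X in _ + X](eq_big_nat _ _ (F2 := fun _ => 1)); last first.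
  move=> i /andP[hi _]; have -> : (P - m < i) = true by lia.
  by [].
by rewrite !sum_nat_const_nat; lia.
Qed.

Lemma sum_bad (m P : nat) : 0 < m -> m <= P ->
  \sum_(0 <= r < P) ((r < m) || (P - m < r)) <= 2 * m - 1.
Proof.
move=> m0 hm.
apply: leq_trans (_ : \sum_(0 <= r < P) ((r < m) + (P - m < r)) <= _).
  by apply: leq_sum => r _; case: (r < m); case: (P - m < r).
by rewrite big_split /= sum_lt // sum_gt //; lia.
Qed.

Lemma count_one (w m n : nat) : 0 < w -> 0 < m -> 0 < n ->
  \sum_(0 <= k < w * (2 * n * m))
     (((k * w) %% (w * (2 * n * m)) < w * m) ||
      (w * (2 * n * m) - w * m < (k * w) %% (w * (2 * n * m)))) <= 2 * (w * m) - 1.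
Proof.
move=> w0 m0 n0.
set P := 2 * n * m.
have mP : m <= P by rewrite /P -{1}(mul1n m) leq_mul2r; apply/orP; right; lia.
rewrite (eq_big_nat _ _ (F2 := fun k => (((k %% P) < m) || (P - m < k %% P) : nat))).
  rewrite (sum_period (fun r => ((r < m) || (P - m < r) : nat))).
  apply: leq_trans (_ : w * (2 * m - 1) <= _); last by rewrite mulnBr muln1 [2 * (w * m)]mulnCA leq_sub2l.
  by rewrite leq_mul2l sum_bad // orbT.
move=> k _.
by rewrite mulnC -muln_modr ltn_pmul2l // -mulnBr ltn_pmul2l.
Qed.

Lemma exists_good (n : nat) (v : nat -> nat) : 0 < n ->
  (forall i, 0 < i <= n -> 0 < v i) ->
  exists k, forall i, 0 < i <= n ->
    \prod_(1 <= j < n.+1) v j <= (k * v i) %% (2 * n * \prod_(1 <= j < n.+1) v j)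
      <= 2 * n * \prod_(1 <= j < n.+1) v j - \prod_(1 <= j < n.+1) v j.
Proof.
move=> n0 hpos.
set M := \prod_(1 <= j < n.+1) v j.
set N := 2 * n * M.
have M0 : 0 < M.
  rewrite /M big_nat_cond; apply: prodn_cond_gt0 => i /andP[/andP[h1 h2] _].
  by apply: hpos; rewrite h1 -ltnS.
have dM : forall i, 0 < i <= n -> v i %| M.
  move=> i /andP[h1 h2].
  rewrite /M (bigD1_seq i) //=; last by rewrite iota_uniq.
    exact: dvdn_mulr.
  by rewrite mem_index_iota h1 ltnS.
pose bad i k := ((k * v i) %% N < M) || (N - M < (k * v i) %% N).
pose c k := \sum_(1 <= i < n.+1) bad i k.
have hcnt : forall i, 0 < i <= n -> \sum_(0 <= k < N) bad i k <= 2 * M - 1.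
  move=> i hi.
  have w0 := hpos i hi.
  have m0 : 0 < M %/ v i by rewrite divn_gt0 // dvdn_leq // dM.
  have eM : M = v i * (M %/ v i) by rewrite mulnC divnK // dM.
  move: m0 eM; set m := M %/ v i => m0 eM.
  have eN : v i * (2 * n * m) = N by rewrite /N eM mulnCA.
  have := count_one _ _ _ w0 m0 n0.
  by rewrite eN -eM.
case: (boolp.pselect (exists k, k < N /\ c k = 0)) => [[k [hk ck]]|no].
  exists k => i hi.
  have : bad i k = false.
    move/eqP: ck; rewrite /c sum_nat_seq_eq0 => /allP /(_ i).
    rewrite mem_index_iota ltnS; case/andP: hi => -> -> /(_ isT) /=.
    by rewrite eqb0 => /negbTE.
  rewrite /bad => /negbT; rewrite negb_or -!leqNgt => /andP[h1 h2].
  rewrite h1 /=; move: h2; rewrite -/N; lia.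
exfalso.
have hpos' : forall k, k < N -> 0 < c k.
  by move=> k hk; rewrite lt0n; apply/eqP => h; apply: no; exists k.
have : N <= \sum_(0 <= k < N) c k.
  apply: leq_trans (_ : \sum_(0 <= k < N) 1 <= _).
    by rewrite sum_nat_const_nat subn0 muln1.
  rewrite big_nat_cond [X in _ <= X]big_nat_cond.
  by apply: leq_sum => k /andP[/andP[_ hk] _]; apply: hpos'.
rewrite /c exchange_big /=.
have : \sum_(1 <= i < n.+1) \sum_(0 <= k < N) bad i k <= \sum_(1 <= i < n.+1) (2 * M - 1).
  rewrite big_nat_cond [X in _ <= X]big_nat_cond.
  apply: leq_sum => i /andP[/andP[h1 h2] _]; apply: hcnt; rewrite h1 -ltnS //.
rewrite sum_nat_const_nat /N; lia.
Qed.

Local Open Scope ring_scope.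
Section S.
Variable R : realType.

Lemma ML_ge n v (d : R) (t : R) : d <= 1 ->
  (forall j, (1 <= j <= n)%N -> d <= dist_int (t * (v j)%:R)) -> d <= ML R n v.
Proof.
move=> d1 H.
have Hl : d <= loneliness n v t.
  rewrite /loneliness big_nat_cond; apply: le_bigmin => // i /andP[/andP[Hi1 Hi2] _].
  by apply: H; rewrite Hi1 -ltnS Hi2.
apply: le_trans Hl _.
apply: ub_le_sup; last by exists t.
exists 1 => _ [s _ <-]; exact: bigmin_le_id.
Qed.

Lemma dist_ge (u : R) (j : int) (d : R) : 0 < d ->
  j%:~R - 1 + d <= u -> u <= j%:~R - d -> d <= dist_int u.
Proof.
move=> d0 h1 h2.
rewrite /dist_int.
have -> : Num.floor u = j - 1.
  apply: floor_def; rewrite subrK intrD /=; apply/andP; split; lra.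
rewrite le_min intrD /=; apply/andP; split; lra.
Qed.
Lemma step_aux (s L d J : R) : 0 < d -> 2 * d <= L ->
  J <= s + L / 2 + 1 / 2 -> s + L / 2 + 1 / 2 < J + 1 ->
  s + L - J <= J - s ->
  exists s' e : R, [/\ s <= s', e <= s + L, J - 1 + d <= s', e <= J - d &
     Num.min (1 - 2 * d) ((L - 2 * d) / 2) <= e - s'].
Proof.
move=> d0 hL h1 h2 h3.
have Hm : forall s' e, s <= s' -> e <= s + L -> J - 1 + d <= s' -> e <= J - d ->
   ((1 - 2 * d) <= e - s' \/ (L - 2 * d) / 2 <= e - s') ->
   exists s' e : R, [/\ s <= s', e <= s + L, J - 1 + d <= s', e <= J - d &
     Num.min (1 - 2 * d) ((L - 2 * d) / 2) <= e - s'].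
  move=> s' e a b c f g; exists s', e; split => //.
  by rewrite ge_min; apply/orP.
case: (lerP s (J - 1 + d)) => hs; case: (lerP (J - d) (s + L)) => he.
- apply: (Hm (J - 1 + d) (J - d)); try lra; left; lra.
- apply: (Hm (J - 1 + d) (s + L)); try lra; right; lra.
- apply: (Hm s (J - d)); try lra; right; lra.
- apply: (Hm s (s + L)); try lra; right; lra.
Qed.

Lemma step_scaled (s L d : R) : 0 < d -> 2 * d <= L ->
  exists (j : int) (s' e : R), [/\ s <= s', e <= s + L, j%:~R - 1 + d <= s',
     e <= j%:~R - d & Num.min (1 - 2 * d) ((L - 2 * d) / 2) <= e - s'].
Proof.
move=> d0 hL.
set j0 := Num.floor (s + L / 2 + 1 / 2).
have h1 := floor_le (s + L / 2 + 1 / 2).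
have h2 := floorD1_gt (s + L / 2 + 1 / 2).
rewrite intrD /= mulr1z -/j0 in h1 h2.
case: (lerP (s + L - j0%:~R) (j0%:~R - s)) => hc.
  have [s' [e H]] := step_aux _ _ _ _ d0 hL h1 h2 hc.
  by exists j0, s', e.
(* mirror *)
have [s'' [e'' [a b c f g]]] :=
  step_aux (- (s + L)) L d (- j0%:~R) d0 hL ltac:(lra) ltac:(lra) ltac:(lra).
exists (j0 + 1), (- e''), (- s''); rewrite intrD /= mulr1z; split; try lra.

Qed.
Lemma step_real (a l d w : R) : 0 < d -> 0 < w -> 2 * d <= l * w ->
  exists a' l' : R, [/\ a <= a', a' + l' <= a + l,
    Num.min (1 - 2 * d) ((l * w - 2 * d) / 2) <= l' * w &
    forall t, a' <= t -> t <= a' + l' -> d <= dist_int (t * w)].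
Proof.
move=> d0 w0 hL.
have [j [s' [e [h1 h2 h3 h4 h5]]]] := step_scaled (a * w) (l * w) d d0 hL.
have wn : w != 0 by rewrite gt_eqF.
exists (s' / w), ((e - s') / w); split.
- by rewrite ler_pdivlMr.
- by rewrite -mulrDl addrC subrK ler_pdivrMr // mulrDl.
- by rewrite divfK.
- move=> t ht1 ht2.
  rewrite ler_pdivrMr // in ht1.
  rewrite -mulrDl addrC subrK ler_pdivlMr // in ht2.
  apply: (dist_ge _ j) => //; lra.
Qed.
Lemma arith1 (al c d N I : R) : d * (N + c) = al -> 2 * al <= 1 + c -> 0 <= c ->
  0 < d -> 0 <= I -> 2 * d * (N - I - 1) <= (1 - 2 * d) * (I + 1 + c).
Proof. move=> h1 h2 h3 h4 h5; nra. Qed.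

Lemma arith2 (c d N I LW : R) : 0 <= c -> 0 < d -> 1 <= I -> I + 1 <= N ->
  2 * d * (N - I) <= LW ->
  2 * d * (N - I - 1) <= (LW - 2 * d) / 2 * (I + 1 + c).
Proof.
move=> h1 h2 h3 h4 h5.
have hB : d * (N - I - 1) <= (LW - 2 * d) / 2 by lra.
have hp : 0 <= d * (N - I - 1) by apply: mulr_ge0; lra.
nra.
Qed.

Lemma nested (alpha c : R) (n : nat) (v : nat -> nat) :
  0 < alpha -> 0 <= c -> 2 * alpha <= 1 + c ->
  (forall i, (1 <= i <= n)%N -> (0 < v i)%N) ->
  (forall i, (2 <= i <= n)%N -> (i%:R + c - 1) * (v i.-1)%:R <= (v i)%:R) ->
  forall i, (1 <= i <= n)%N ->
  exists a l : R,
    2 * (alpha / (n%:R + c)) * (n%:R - i%:R) <= l * (v i)%:R * (i%:R + c) /\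
    forall t, a <= t -> t <= a + l -> forall j, (1 <= j <= i)%N ->
      alpha / (n%:R + c) <= dist_int (t * (v j)%:R).
Proof.
move=> a0 c0 hac hpos hrat.
set d := alpha / (n%:R + c).
elim=> [|i IH]; first by []. 
move=> hii; have /andP[hi1 hin] := hii; clear hii.
have hn1 : (1 <= n)%N by apply: leq_trans hin.
have Nc : 0 < n%:R + c.
  have : (1%:R <= n%:R :> R) by rewrite ler_nat.
  lra.
have d0 : 0 < d by rewrite /d divr_gt0.
have dN : d * (n%:R + c) = alpha by rewrite /d divfK // gt_eqF.
have Nge : (i.+1%:R <= n%:R :> R) by rewrite ler_nat.
rewrite -natr1 in Nge.
have I0 : (0 <= i%:R :> R) by rewrite ler0n.
have vp : (0 < (v i.+1)%:R :> R) by rewrite ltr0n hpos // hin.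
case: i IH hi1 hin Nge I0 vp => [|i] IH _ hin Nge I0 vp.
-
  have h2 : 2 * d <= (2 / (v 1)%:R) * (v 1)%:R.
    rewrite divfK ?gt_eqF //; nra.
  have [a' [l' [_ _ hm ht]]] := step_real 0 _ _ _ d0 vp h2.
  exists a', l'; split.
    rewrite divfK ?gt_eqF // in hm.
    have hm' : 1 - 2 * d <= l' * (v 1)%:R.
      apply: le_trans hm; rewrite le_min; apply/andP; split; lra.
    have h := arith1 _ _ _ _ 0 dN hac c0 d0 (lexx 0).
    rewrite ?mulr1n; nra.
  move=> t h1 h2' j /andP[j1 j2].
  have -> : j = 1%N by apply/eqP; rewrite eqn_leq j2 j1.
  exact: ht.
-
  have [a [l [Hl Ht]]] := IH (ltnW hin).
  have vi : (0 < (v i.+1)%:R :> R) by rewrite ltr0n; apply: hpos; exact: ltnW hin.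
  have hr := hrat i.+2 ltac:(by rewrite hin).
  rewrite /= in hr.
  have e1 : (i.+2%:R : R) = i.+1%:R + 1 by rewrite -natr1.
  have e0 : (i.+1%:R : R) = i%:R + 1 by rewrite -natr1.
  have Ic : 0 < i.+1%:R + c by have := ltr0Sn R i; lra.
  have l0 : 0 <= l.
    have : 0 <= l * (v i.+1)%:R * (i.+1%:R + c).
      apply: le_trans Hl; apply: mulr_ge0; lra.
    by rewrite pmulr_lge0 // pmulr_lge0.
  have hLW : 2 * d * (n%:R - i.+1%:R) <= l * (v i.+2)%:R.
    apply: (le_trans Hl); rewrite -mulrA; apply: ler_wpM2l => //.
    rewrite mulrC; apply: le_trans hr; apply: ler_wpM2r; [by rewrite ler0n|].
    lra.
  have h2 : 2 * d <= l * (v i.+2)%:R.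
    apply: le_trans hLW; nra.
  have [a' [l' [ha1 ha2 hm ht]]] := step_real a _ _ _ d0 vp h2.
  exists a', l'; split.
    rewrite ge_min in hm; case/orP: hm => hm.
      have h := arith1 _ _ _ _ (i.+1%:R) dN hac c0 d0 ltac:(lra).
      rewrite e1; nra.
    have h := arith2 _ _ _ _ _ c0 d0 _ Nge hLW.
    have h1 : (1 <= i.+1%:R :> R) by rewrite ler1n.
    have {}h := h h1.
    have Ic' : 0 <= i.+1%:R + 1 + c by lra.
    have := ler_wpM2r Ic' hm.
    rewrite e1; lra.
  move=> t h1 h3 j /andP[j1 j2].
  case: (ltngtP j i.+2) j2 => // [hj|->] _; last exact: ht.
  apply: Ht => //; [lra|lra|by rewrite j1 -ltnS].
Qed.

Lemma good_real (n : nat) (v : nat -> nat) : (0 < n)%N ->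
  (forall i, (0 < i <= n)%N -> (0 < v i)%N) ->
  exists t : R, forall j, (0 < j <= n)%N -> 1 / (2 * n%:R) <= dist_int (t * (v j)%:R).
Proof.
move=> n0 hpos.
have [k hk] := exists_good _ _ n0 hpos.
move: hk; set M := (\prod_(1 <= j < n.+1) v j)%N => hk.
have M0 : (0 < M)%N.
  rewrite /M big_nat_cond; apply: prodn_cond_gt0 => i /andP[/andP[h1 h2] _].
  by apply: hpos; rewrite h1 -ltnS.
set N := (2 * n * M)%N.
have N0 : (0 < N)%N by rewrite /N !muln_gt0 n0 M0.
have Nr : (0 < N%:R :> R) by rewrite ltr0n.
have eMN : 1 / (2 * n%:R) = M%:R / N%:R :> R.
  rewrite /N !natrM; field.
  by rewrite !pnatr_eq0 -!lt0n n0 M0.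
exists (k%:R / N%:R) => j hj.
have /andP[h1 h2] := hk j hj.
set r := ((k * v j) %% N)%N in h1 h2.
set q := ((k * v j) %/ N)%N.
have etv : k%:R / N%:R * (v j)%:R = q%:R + r%:R / N%:R :> R.
  rewrite mulrAC -natrM (divn_eq (k * v j) N) natrD natrM mulrDl mulfK ?gt_eqF //.
have hr1 : M%:R / N%:R <= r%:R / N%:R :> R.
  by rewrite ler_pM2r ?invr_gt0 // ler_nat.
have hr2 : r%:R / N%:R <= 1 - M%:R / N%:R :> R.
  have : (r%:R <= N%:R - M%:R :> R).
    rewrite -natrB; first by rewrite ler_nat.
    by rewrite /N -{1}(mul1n M) leq_mul2r orbC; apply/orP; left; lia.
  move=> h.
  have h' : r%:R / N%:R <= (N%:R - M%:R) / N%:R :> R by rewrite ler_pM2r ?invr_gt0.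
  by rewrite mulrBl divff ?gt_eqF // in h'.
rewrite etv eMN.
apply: (dist_ge _ (q.+1)%:Z).
- by rewrite divr_gt0 // ltr0n.
- have -> : ((q.+1)%:Z)%:~R = q%:R + 1 :> R by rewrite natr1.
  lra.
- have -> : ((q.+1)%:Z)%:~R = q%:R + 1 :> R by rewrite natr1.
  lra.
Qed.
End S.

Local Open Scope ring_scope.

Theorem proposition8p2 (R : realType) (alpha c : R) (n : nat) (v : nat -> nat)
  (halpha : 0 < alpha) (hc : -1 < c) (hac : alpha / (1 + c) <= 1 / 2)
  (hn : (1 <= n)%N)
  (hpos : forall i : nat, (1 <= i <= n)%N -> (0 < v i)%N)
  (hratio : forall i : nat, (2 <= i <= n)%N ->
     (v i)%:R / (v i.-1)%:R >= i%:R + c - 1) :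
  alpha / (n%:R + c) <= ML R n v.
Proof.
have n1 : (1 <= n%:R :> R) by rewrite ler1n.
have Nc : 0 < n%:R + c by lra.
have c1 : 0 < 1 + c by lra.
have hac' : 2 * alpha <= 1 + c.
  by move: hac; rewrite ler_pdivrMr // => h; lra.
set d := alpha / (n%:R + c).
have dN : d * (n%:R + c) = alpha by rewrite /d divfK // gt_eqF.
have d0 : 0 < d by rewrite /d divr_gt0.
case: (lerP 0 c) => hc0.
- have hrat : forall i, (2 <= i <= n)%N -> (i%:R + c - 1) * (v i.-1)%:R <= (v i)%:R.
    move=> i hi; have := hratio i hi.
    have vp : (0 < (v i.-1)%:R :> R).
      rewrite ltr0n; apply: hpos; case/andP: hi => h1 h2.
      by apply/andP; split; [rewrite -ltnS prednK // ltnW | apply: leq_trans (leq_pred i) h2].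
    by rewrite ler_pdivlMr.
  have [a [l [Hl Ht]]] := nested _ _ _ _ _ halpha hc0 hac' hpos hrat n ltac:(by rewrite hn leqnn).
  have vn : (0 < (v n)%:R :> R) by rewrite ltr0n hpos // hn leqnn.
  have l0 : 0 <= l.
    move: Hl; rewrite subrr mulr0 => Hl.
    by move: Hl; rewrite pmulr_lge0 // pmulr_lge0.
  apply: (ML_ge _ _ _ _ a); first by nra.
  move=> j hj; apply: Ht => //; lra.
- have [t Ht] := good_real R _ _ hn hpos.
  apply: (ML_ge _ _ _ _ t); first by nra.
  move=> j hj; apply: le_trans (Ht j hj).
  have n0 : 0 < 2 * n%:R :> R by lra.
  rewrite /d ler_pdivrMr // mulrAC ler_pdivlMr //.
  nra.
Qed.
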